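(* Let $\mathscr{O}$ be an operad in $\mathbbm{k}$-vector spaces and $\mu\in\mathscr{O}(2)$ satisfy the right Leibniz condition. Then: (1) The full subcategory $\mathcal{F}^\mu_{\mathscr{O}}\subset\mathcal{F}_{\mathscr{O}}$ is closed under the formation of subobjects, quotients and direct sums. (2) If $0\to F_1\to F_2\to F_3\to 0$ is a short exact sequence in $\mathcal{F}_{\mathscr{O}}$ with $F_1,F_3\in\mathcal{F}^\mu_{\mathscr{O}}$, then $\widetilde{\mu}_{F_2}:\delta F_2\to F_2$ factors canonically as $\delta F_2\twoheadrightarrow\delta F_3\to F_1\hookrightarrow F_2$, where the first map is $\delta(F_2\twoheadrightarrow F_3)$ and the last is the inclusion. In particular, $F_2\in\mathcal{F}^\mu_{\mathscr{O}}$ if and only if the morphism $\delta F_3\to F_1$ is zero.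
   Context: $\mathbf{Cat}\,\mathscr{O}$ is the $\mathbbm{k}$-linear PROP associated to $\mathscr{O}$ (objects $\mathbb{N}$, $\mathbf{Cat}\,\mathscr{O}(m,n)=\bigoplus_{f:\{1..m\}\to\{1..n\}}\bigotimes_i\mathscr{O}(|f^{-1}(i)|)$, $\boxplus$ = addition on objects); $\mathcal{F}_{\mathscr{O}}$ is the abelian category of $\mathbbm{k}$-linear functors $\mathbf{Cat}\,\mathscr{O}\to\mathbbm{k}$-vector spaces. $\delta F(n)=F(n+1)$, $\xi$ acting by $F(\xi\boxplus\mathrm{Id}_1)$ ($\delta$ is exact). For $1\le i\le n$, $\mu_i(n)\in\mathbf{Cat}\,\mathscr{O}(n+1,n)$ is given by the map $j\mapsto j$ ($j\le n$), $n+1\mapsto i$, identity on singleton fibres and $\mu$ with inputs $(i,n+1)$ over $i$. The right Leibniz condition: $\mu\circ(\nu\boxplus\mathrm{Id}_1)=\nu\circ\sum_i\mu_i(n)$ in $\mathscr{O}(n+1)$ for all $n$, $\nu\in\mathscr{O}(n)$; under it the maps $\widetilde\mu_F(n)=F(\sum_i\mu_i(n))$ form a natural transformation $\widetilde\mu_F:\delta F\to F$, natural in $F$. $\mathcal{F}^\mu_{\mathscr{O}}$ is the full subcategory of $F$ with $\widetilde\mu_F=0$. *)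

(* Defs.v *)
From Stdlib Require List.
From HB Require Import structures.
From mathcomp Require Import all_boot all_order all_algebra all_fingroup.
Set Implicit Arguments. Unset Strict Implicit. Unset Printing Implicit Defensive.
Import GRing.Theory.
Local Open Scope ring_scope.

(* Operads in K-vector spaces, in the "partial composition" presentation.     *)
(* Indices are 0-based.  Conventions (the endomorphism-operad model):        *)
(*   (x . s)(v_0,..,v_{n-1})      = x(v_{s 0},..,v_{s (n-1)})  (right action)*)
(*   (x o_i y)(v_0,..)            = x(v_0,..,v_{i-1}, y(v_i,..,v_{i+m-1}),..)*)
Record operad (K : fieldType) := Operad {
  ob : nat -> lmodType K;
  oact : forall n, 'S_n -> ob n -> ob n;
  ocomp : forall l m, nat -> ob l -> ob m -> ob (l + m - 1)%N;
  ounit : ob 1 }.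

Section Defs.
Variables (K : fieldType) (O : operad K).

Definition ops := {a : nat & ob O a}.
Definition op_ a (x : ob O a) : ops := existT (fun a => ob O a) a x.

(* transport along an equality of arities (0 when arities differ: never used) *)
Definition ocast a b (x : ob O a) : ob O b :=
  match @eqP _ a b with
  | ReflectT e => eq_rect a (ob O) x b e
  | ReflectF _ => 0
  end.

Definition pcomp (i : nat) (x y : ops) : ops :=
  op_ (@ocomp K O (tag x) (tag y) i (projT2 x) (projT2 y)).

(* the permutation of 'I_n given by a nat function (identity if not a bijection) *)
Definition pfun n (h : nat -> nat) : 'S_n :=
  insubd (1%g : 'S_n) [ffun p : 'I_n => insubd p (h p)].

Definition pnat n (s : 'S_n) (b : nat) : nat :=
  match (insub b : option 'I_n) with Some b' => val (s b') | None => b end.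

Definition sact (x : ops) (h : nat -> nat) : ops :=
  op_ (@oact K O (tag x) (pfun (tag x) h) (projT2 x)).

Definition is_operad : Prop :=
  (
      (forall n (s : 'S_n) a (x y : ob O n),
          oact s (a *: x + y) = a *: oact s x + oact s y) /\
      (forall l m i a (x y : ob O l) (z : ob O m),
          ocomp i (a *: x + y) z = a *: ocomp i x z + ocomp i y z) /\
      (forall l m i a (x : ob O l) (y z : ob O m),
          ocomp i x (a *: y + z) = a *: ocomp i x y + ocomp i x z) /\
      (forall n (x : ob O n), oact 1%g x = x) /\
      (forall n (s t : 'S_n) (x : ob O n), oact t (oact s x) = oact (s * t)%g x) /\
      (forall n (x : ob O n), pcomp 0 (op_ (ounit O)) (op_ x) = op_ x) /\
      (forall n (x : ob O n) i, (i < n)%N -> pcomp i (op_ x) (op_ (ounit O)) = op_ x) /\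
      (forall l m n (x : ob O l) (y : ob O m) (z : ob O n) i j,
          (i < l)%N -> (j < m)%N ->
          pcomp (i + j) (pcomp i (op_ x) (op_ y)) (op_ z)
          = pcomp i (op_ x) (pcomp j (op_ y) (op_ z))) /\
      (forall l m n (x : ob O l) (y : ob O m) (z : ob O n) i k,
          (i < k < l)%N ->
          pcomp (k + m - 1) (pcomp i (op_ x) (op_ y)) (op_ z)
          = pcomp i (pcomp k (op_ x) (op_ z)) (op_ y)))
  /\
  (forall l m (x : ob O l) (y : ob O m) i (t : 'S_m), (i < l)%N ->
      pcomp i (op_ x) (op_ (oact t y))
      = sact (pcomp i (op_ x) (op_ y))
             (fun a => if (i <= a < i + m)%N then (i + pnat t (a - i))%N else a))
  /\
  (forall l m (x : ob O l) (y : ob O m) i (s : 'S_l), (i < l)%N ->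
      let j := pnat s^-1%g i in
      let e c := if (c < i)%N then c else (c + m - 1)%N in
      pcomp i (op_ (oact s x)) (op_ y)
      = sact (pcomp j (op_ x) (op_ y))
             (fun p => if (p < j)%N then e (pnat s p)
                       else if (p < j + m)%N then (i + (p - j))%N
                       else e (pnat s (p - m + 1)))).

(* The PROP Cat O.  A pure morphism m -> n is a map f : 'I_m -> 'I_n together *)
(* with a decoration xi : 'I_n -> ops, xi i in O(|f^-1(i)|), the inputs of    *)
(* xi i labelled by the fibre f^-1(i) in increasing order.  General morphisms *)
(* are linear combinations of (tensors of) these.                             *)
Definition fib m n (f : 'I_m -> 'I_n) (i : 'I_n) : seq 'I_m :=
  [seq j <- enum 'I_m | f j == i].

Definition wf m n (f : 'I_m -> 'I_n) (xi : 'I_n -> ops) : Prop :=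
  forall i, tag (xi i) = size (fib f i).

Definition gamma (x : ops) (ys : seq ops) : ops :=
  foldr (fun p acc => pcomp p.1 acc p.2) x (zip (iota 0 (size ys)) ys).

Definition compdec m n p (g : 'I_n -> 'I_p) (xi' : 'I_p -> ops)
    (f : 'I_m -> 'I_n) (xi : 'I_n -> ops) : 'I_p -> ops :=
  fun k =>
    let Ln := flatten [seq [seq val j | j <- fib f i] | i <- fib g k] in
    let Nn := [seq val j | j <- fib (g \o f) k] in
    sact (gamma (xi' k) [seq xi i | i <- fib g k])
         (fun q => index (nth 0%N Ln q) Nn).

(* K-linear functors Cat O -> K-vector spaces, given on pure morphisms *)
Record functorO := FunctorO {
  Fob : nat -> lmodType K;
  Fmor : forall m n, ('I_m -> 'I_n) -> ('I_n -> ops) -> Fob m -> Fob n }.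
Arguments Fmor f {m n} _ _ _.

Definition upd n (xi : 'I_n -> ops) (i : 'I_n) (s : ops) : 'I_n -> ops :=
  fun j => if j == i then s else xi j.

Definition is_functorO (F : functorO) : Prop :=
  [/\ (forall m n (f : 'I_m -> 'I_n) xi a (u v : Fob F m),
          Fmor F f xi (a *: u + v) = a *: Fmor F f xi u + Fmor F f xi v),
      (forall m n (f : 'I_m -> 'I_n) xi, wf f xi ->
         forall i (x y : ob O (tag (xi i))) a (v : Fob F m),
           Fmor F f (upd xi i (op_ (a *: x + y))) v
           = a *: Fmor F f (upd xi i (op_ x)) v + Fmor F f (upd xi i (op_ y)) v),
      (forall n (v : Fob F n), Fmor F (@id 'I_n) (fun _ => op_ (ounit O)) v = v) &
      (forall m n p (f : 'I_m -> 'I_n) xi (g : 'I_n -> 'I_p) xi',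
         wf f xi -> wf g xi' -> forall v : Fob F m,
           Fmor F (g \o f) (compdec g xi' f xi) v = Fmor F g xi' (Fmor F f xi v)) ].

Definition is_nat (F G : functorO) (phi : forall n, Fob F n -> Fob G n) : Prop :=
  (forall n a (u v : Fob F n), phi n (a *: u + v) = a *: phi n u + phi n v) /\
  (forall m n (f : 'I_m -> 'I_n) xi, wf f xi -> forall v : Fob F m,
      phi n (Fmor F f xi v) = Fmor G f xi (phi m v)).


Definition fplus1 m n (f : 'I_m -> 'I_n) : 'I_m.+1 -> 'I_n.+1 :=
  fun j => if unlift ord_max j is Some j' then lift ord_max (f j') else ord_max.
Definition decplus1 n (xi : 'I_n -> ops) : 'I_n.+1 -> ops :=
  fun k => if unlift ord_max k is Some k' then xi k' else op_ (ounit O).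

Definition delta (F : functorO) : functorO :=
  @FunctorO (fun n => Fob F n.+1)
            (fun m n f xi => Fmor F (fplus1 f) (decplus1 xi)).

Definition muf n (i : 'I_n) : 'I_n.+1 -> 'I_n :=
  fun j => if unlift ord_max j is Some j' then j' else i.
Definition mudec (mu : ob O 2) n (i : 'I_n) : 'I_n -> ops :=
  fun k => if k == i then op_ mu else op_ (ounit O).

Definition mut (mu : ob O 2) (F : functorO) n (v : Fob F n.+1) : Fob F n :=
  \sum_(i < n) Fmor F (muf i) (mudec mu i) v.


Definition inFmu (mu : ob O 2) (F : functorO) : Prop :=
  forall n (v : Fob F n.+1), @mut mu F n v = 0.

(* right Leibniz condition, as an identity in Cat O(n+1, 1) = O(n+1) *)
Definition el1 (xi : 'I_1 -> ops) (N : nat) : ob O N := ocast N (projT2 (xi ord0)).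

Definition right_leibniz (mu : ob O 2) : Prop :=
  forall n (nu : ob O n),
    el1 (compdec (fun _ : 'I_2 => (ord0 : 'I_1)) (fun _ => op_ mu)
                 (fplus1 (fun _ : 'I_n => (ord0 : 'I_1)))
                 (decplus1 (fun _ : 'I_1 => op_ nu))) n.+1
    = \sum_(i < n) el1 (compdec (fun _ : 'I_n => (ord0 : 'I_1)) (fun _ => op_ nu)
                               (muf i) (mudec mu i)) n.+1.

Definition is_dsum (J : Type) (Fj : J -> functorO) (F : functorO)
    (iota : forall j n, Fob (Fj j) n -> Fob F n) : Prop :=
  forall n,
    (forall v : Fob F n, exists s : seq {j : J & Fob (Fj j) n},
        v = \sum_(q <- s) iota (projT1 q) n (projT2 q)) /\
    (forall s : seq {j : J & Fob (Fj j) n},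
        List.NoDup (map (@projT1 _ _) s) ->
        \sum_(q <- s) iota (projT1 q) n (projT2 q) = 0 ->
        forall q, List.In q s -> projT2 q = 0).

Definition short_exact (F1 F2 F3 : functorO)
    (i : forall n, Fob F1 n -> Fob F2 n) (p : forall n, Fob F2 n -> Fob F3 n) : Prop :=
  @is_nat F1 F2 i /\ @is_nat F2 F3 p /\
  forall n, injective (i n) /\ (forall w, exists v, p n v = w) /\
            (forall v, p n v = 0 <-> exists u, v = i n u).

End Defs.

Arguments is_nat {K O} F G phi.
Arguments short_exact {K O} F1 F2 F3 i p.
Arguments is_dsum {K O J} Fj F iota.
Arguments mut {K O} mu F {n} v.
Arguments inFmu {K O} mu F.
Arguments right_leibniz {K O} mu.
Arguments delta {K O} F.
Arguments is_functorO {K O} F.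
Arguments is_operad {K} O.

(* Main.v *)
Require Import Defs.
From Stdlib Require List.
From Stdlib Require Import ClassicalEpsilon FunctionalExtensionality.
From HB Require Import structures.
From mathcomp Require Import all_boot all_order all_algebra all_fingroup.
From mathcomp Require Import zify.
Set Implicit Arguments. Unset Strict Implicit. Unset Printing Implicit Defensive.
Import GRing.Theory.
Local Open Scope ring_scope.



Section Lin.
Definition islin (K : fieldType) (U V : lmodType K) (h : U -> V) :=
  forall a (u v : U), h (a *: u + v) = a *: h u + h v.

Lemma lin0 (K : fieldType) (U V : lmodType K) (h : U -> V) : islin h -> h 0 = 0.
Proof.
move=> H; have := H 1 0 0; rewrite !scale1r addr0 => E.
by apply: (@addrI _ (h 0)); rewrite addr0 -E.
Qed.

Lemma linD (K : fieldType) (U V : lmodType K) (h : U -> V) : islin h ->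
  forall u v, h (u + v) = h u + h v.
Proof. by move=> H u v; have := H 1 u v; rewrite !scale1r. Qed.

Lemma linB (K : fieldType) (U V : lmodType K) (h : U -> V) : islin h ->
  forall u v, h (u - v) = h u - h v.
Proof.
move=> H u v; have -> : u - v = (-1) *: v + u by rewrite scaleN1r addrC.
by rewrite H scaleN1r addrC.
Qed.

Lemma lin_sum (K : fieldType) (U V : lmodType K) (h : U -> V) : islin h ->
  forall (I : Type) (r : seq I) (P : pred I) (F : I -> U),
  h (\sum_(x <- r | P x) F x) = \sum_(x <- r | P x) h (F x).
Proof.
move=> H I r P F; elim: r => [|x r IH]; first by rewrite !big_nil lin0.
rewrite !big_cons; case: (P x) => //; by rewrite ?linD // IH.
Qed.
End Lin.
Lemma enumS n : enum 'I_n.+1 = rcons (map (lift ord_max) (enum 'I_n)) ord_max.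
Proof.
rewrite enum_ordSr; congr rcons; apply: eq_map => x; apply: val_inj.
by rewrite /= /bump leqNgt ltn_ord.
Qed.

Lemma filterS (T : eqType) m (g : 'I_m.+1 -> T) (i : T) :
  [seq x <- enum 'I_m.+1 | g x == i] =
  [seq lift ord_max x | x <- [seq x <- enum 'I_m | g (lift ord_max x) == i]]
  ++ (if g ord_max == i then [:: ord_max] else [::]).
Proof.
by rewrite enumS filter_rcons filter_map -cats1; case: ifP; rewrite ?cats0.
Qed.

Lemma lift_maxv m (x : 'I_m) : val (lift ord_max x) = val x.
Proof. by rewrite /= /bump leqNgt ltn_ord. Qed.

Lemma mapval_lift m (s : seq 'I_m) :
  [seq val x | x <- [seq lift ord_max x | x <- s]] = [seq val x | x <- s].
Proof. by rewrite -map_comp; apply: eq_map => -[x hx] /=; rewrite /bump leqNgt hx. Qed.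

Lemma fib_const m (g : 'I_m -> 'I_1) i : fib g i = enum 'I_m.
Proof.
rewrite /fib; rewrite (eq_filter (a2 := predT)) ?filter_predT // => x.
by rewrite !ord1.
Qed.

Lemma fib_fplus1 m n (f : 'I_m -> 'I_n) i :
  fib (fplus1 f) (lift ord_max i) = map (lift ord_max) (fib f i).
Proof.
rewrite /fib filterS.
have -> : (fplus1 f ord_max == lift ord_max i) = false.
  by rewrite /fplus1 unlift_none (negbTE (neq_lift _ _)).
rewrite cats0; congr map; apply: eq_filter => x.
by rewrite /fplus1 liftK (inj_eq (@lift_inj _ _)).
Qed.

Lemma fib_fplus1_max m n (f : 'I_m -> 'I_n) :
  fib (fplus1 f) ord_max = [:: ord_max].
Proof.
rewrite /fib filterS /fplus1 unlift_none eqxx.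
rewrite (eq_filter (a2 := pred0)) ?filter_pred0 // => x.
by rewrite liftK /= eq_sym (negbTE (neq_lift _ _)).
Qed.

Definition ext m n (f : 'I_m -> 'I_n) (c : 'I_n) : 'I_m.+1 -> 'I_n :=
  fun x => if unlift ord_max x is Some x' then f x' else c.

Lemma fib_ext m n (f : 'I_m -> 'I_n) c i :
  fib (ext f c) i = map (lift ord_max) (fib f i) ++ (if c == i then [:: ord_max] else [::]).
Proof.
rewrite /fib filterS /ext unlift_none; congr (_ ++ _); congr map.
by apply: eq_filter => x; rewrite liftK.
Qed.

Lemma fib_id n (i : 'I_n) : fib id i = [:: i].
Proof.
by rewrite /fib filter_pred1_uniq ?enum_uniq ?mem_enum.
Qed.

Lemma muf_ext n (i : 'I_n) : muf i = ext id i.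
Proof. by []. Qed.

Lemma fib_muf n (i j : 'I_n) :
  fib (muf i) j = lift ord_max j :: (if i == j then [:: ord_max] else [::]).
Proof. by rewrite muf_ext fib_ext fib_id. Qed.

Lemma uniq_fibv m n (f : 'I_m -> 'I_n) i : uniq [seq val x | x <- fib f i].
Proof. by rewrite (map_inj_uniq val_inj) filter_uniq ?enum_uniq. Qed.

Lemma fibv_lt m n (f : 'I_m -> 'I_n) i x : x \in [seq val x | x <- fib f i] -> (x < m)%N.
Proof. by case/mapP => y _ ->; apply: ltn_ord. Qed.
Lemma op_eta (K : fieldType) (O : operad K) (s : ops O) : s = op_ (projT2 s).
Proof. by case: s. Qed.

Lemma ocast_id (K : fieldType) (O : operad K) a (x : ob O a) : ocast a x = x.
Proof. by rewrite /ocast; case: eqP => // e; rewrite (eq_axiomK e). Qed.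

Lemma op_ocast (K : fieldType) (O : operad K) (s : ops O) T :
  tag s = T -> op_ (ocast T (projT2 s)) = s.
Proof. by case: s => a x /= e; subst; rewrite ocast_id. Qed.

Lemma pfun_ext n (h h' : nat -> nat) :
  (forall q, (q < n)%N -> h q = h' q) -> pfun n h = pfun n h'.
Proof.
by move=> H; rewrite /pfun; congr insubd; apply/ffunP => p; rewrite !ffunE H.
Qed.

Lemma pfun_id n (h : nat -> nat) :
  (forall q, (q < n)%N -> h q = q) -> pfun n h = 1%g.
Proof.
move=> H; rewrite (pfun_ext (h' := id)) //.
have E : [ffun p : 'I_n => insubd p (id p)] = [ffun p => p].
  by apply/ffunP => p; rewrite !ffunE valKd.
apply/permP => x; rewrite perm1 -pvalE /pfun E val_insubd.
have -> : injectiveb [ffun p : 'I_n => p].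
  by apply/injectiveP => a b; rewrite !ffunE.
by rewrite ffunE.
Qed.

Lemma sact_ext (K : fieldType) (O : operad K) (x : ops O) h h' :
  (forall q, (q < tag x)%N -> h q = h' q) -> sact x h = sact x h'.
Proof. by move=> H; rewrite /sact (pfun_ext H). Qed.

Lemma sact_id (K : fieldType) (O : operad K) (x : ops O) h :
  (forall n (y : ob O n), oact 1%g y = y) ->
  (forall q, (q < tag x)%N -> h q = q) -> sact x h = x.
Proof. by move=> H1 H; rewrite /sact (pfun_id H) H1 -op_eta. Qed.

Definition gstep (K : fieldType) (O : operad K) (p : nat * ops O) (acc : ops O) :=
  Defs.pcomp p.1 acc p.2.

Lemma tag_foldr (K : fieldType) (O : operad K) (ys : seq (ops O)) st (x : ops O) :
  tag x = (st + size ys)%N ->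
  tag (foldr (@gstep K O) x (zip (iota st (size ys)) ys)) = (st + sumn (map (fun y => tag y) ys))%N.
Proof.
elim: ys st => [|y ys IH] st /=; first by rewrite !addn0.
move=> e; rewrite /gstep /= IH; last by rewrite e addSnnS.
lia. Qed.

Lemma tag_gamma (K : fieldType) (O : operad K) (x : ops O) ys :
  tag x = size ys -> tag (gamma x ys) = sumn (map (fun y => tag y) ys).
Proof. by move=> e; rewrite /gamma -/(gstep _) tag_foldr. Qed.



Lemma gamma_unit1 (K : fieldType) (O : operad K) (s : ops O) :
  (forall n (x : ob O n), Defs.pcomp 0 (op_ (ounit O)) (op_ x) = op_ x) ->
  gamma (op_ (ounit O)) [:: s] = s.
Proof. by move=> H; rewrite /gamma /= [s]op_eta H. Qed.

Lemma foldr_units (K : fieldType) (O : operad K) :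
  (forall n (x : ob O n) i, (i < n)%N -> Defs.pcomp i (op_ x) (op_ (ounit O)) = op_ x) ->
  forall r st (x : ops O), (st + r <= tag x)%N ->
  foldr (@gstep K O) x (zip (iota st r) (nseq r (op_ (ounit O)))) = x.
Proof.
move=> H; elim=> [|r IH] st x hx //=.
rewrite IH; last by rewrite addSnnS.
rewrite /gstep /= [x]op_eta H // -?op_eta; change (st < tag x)%N; lia. Qed.

Lemma gamma_units (K : fieldType) (O : operad K) (x : ops O) r :
  (forall n (x : ob O n) i, (i < n)%N -> Defs.pcomp i (op_ x) (op_ (ounit O)) = op_ x) ->
  (r <= tag x)%N -> gamma x (nseq r (op_ (ounit O))) = x.
Proof.
by move=> H hr; rewrite /gamma size_nseq -/(gstep _) (foldr_units H).
Qed.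

Lemma index_map_in (T1 T2 : eqType) (lab : T1 -> T2) (s : seq T1) x :
  uniq (map lab s) -> x \in s -> index (lab x) (map lab s) = index x s.
Proof.
elim: s => [|y s IH] //= /andP [ny us]; rewrite inE.
case: eqP => [-> _|nxy /= xs]; first by rewrite /= !eqxx.
have -> : (lab y == lab x) = false.
  by apply/negbTE; apply: contraNneq ny => ->; apply: map_f.
have -> : (y == x) = false by apply/eqP => e; apply: nxy. 
by rewrite IH. Qed.



Lemma op_act1 (K : fieldType) (O : operad K) : is_operad O ->
  forall n (x : ob O n), oact 1%g x = x.
Proof. by case=> [[_ [_ [_ [H _]]]] _]. Qed.

Lemma op_unit0 (K : fieldType) (O : operad K) : is_operad O ->
  forall n (x : ob O n), Defs.pcomp 0 (op_ (ounit O)) (op_ x) = op_ x.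
Proof. by case=> [[_ [_ [_ [_ [_ [H _]]]]]] _]. Qed.

Lemma op_unit1 (K : fieldType) (O : operad K) : is_operad O ->
  forall n (x : ob O n) i, (i < n)%N -> Defs.pcomp i (op_ x) (op_ (ounit O)) = op_ x.
Proof. by case=> [[_ [_ [_ [_ [_ [_ [H _]]]]]]] _]. Qed.

Lemma mufcomp m n (f : 'I_m -> 'I_n) (k : 'I_n) : muf k \o fplus1 f = ext f k.
Proof.
apply: functional_extensionality => x /=; rewrite /ext /muf /fplus1.
by case: (unliftP ord_max x) => [y _|_]; rewrite ?liftK ?unlift_none.
Qed.

Lemma compmuf m n (f : 'I_m -> 'I_n) (j : 'I_m) : f \o muf j = ext f (f j).
Proof.
by apply: functional_extensionality => x /=; rewrite /ext /muf; case: (unlift _ _).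
Qed.

Definition fibv m n (f : 'I_m -> 'I_n) i := [seq val x | x <- fib f i].

Lemma fibv_ext m n (f : 'I_m -> 'I_n) c i :
  fibv (ext f c) i = fibv f i ++ (if c == i then [:: m] else [::]).
Proof. by rewrite /fibv fib_ext map_cat mapval_lift; case: ifP. Qed.

Lemma D_other (K : fieldType) (O : operad K) (mu : ob O 2) : is_operad O ->
  forall m n (f : 'I_m -> 'I_n) xi, wf f xi -> forall (k k' : 'I_n), k' != k ->
  compdec (muf k) (mudec mu k) (fplus1 f) (decplus1 xi) k' = xi k'.
Proof.
move=> HO m n f xi wfxi k k' nk; rewrite /compdec mufcomp fib_muf.
rewrite eq_sym (negbTE nk) /= {1}/decplus1 liftK /mudec (negbTE nk).
rewrite gamma_unit1; last exact: op_unit0.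
apply: sact_id; first exact: op_act1.
move=> q; rewrite wfxi => hq.
rewrite cats0 fib_fplus1 mapval_lift fib_ext eq_sym (negbTE nk) cats0 mapval_lift.
by rewrite index_uniq // ?uniq_fibv // size_map.
Qed.



Lemma tag_gmu (K : fieldType) (O : operad K) (mu : ob O 2) (s : ops O) :
  tag (gamma (op_ mu) [:: s; op_ (ounit O)]) = (tag s).+1.
Proof. by rewrite tag_gamma //= addn1. Qed.

Lemma D_self (K : fieldType) (O : operad K) (mu : ob O 2) : is_operad O ->
  forall m n (f : 'I_m -> 'I_n) xi, wf f xi -> forall (k : 'I_n),
  compdec (muf k) (mudec mu k) (fplus1 f) (decplus1 xi) k
  = gamma (op_ mu) [:: xi k; op_ (ounit O)].
Proof.
move=> HO m n f xi wfxi k; rewrite /compdec mufcomp fib_muf eqxx /=.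
rewrite {1 2}/decplus1 liftK unlift_none /mudec eqxx.
apply: sact_id; first exact: op_act1.
move=> q; rewrite tag_gmu wfxi => hq.
rewrite cats0 fib_fplus1 fib_fplus1_max mapval_lift fib_ext eqxx map_cat mapval_lift /=.
rewrite index_uniq //; first by rewrite size_cat size_map addn1.
rewrite cat_uniq uniq_fibv /= andbT orbF; apply/negP => /fibv_lt.
by rewrite ltnn.
Qed.

Lemma enum2 : enum 'I_2 = [:: lift ord_max ord_max; ord_max].
Proof. by rewrite enumS enumS enum_ord0. Qed.

Lemma L_loc (K : fieldType) (O : operad K) (mu : ob O 2) : is_operad O ->
  forall N (nu : ob O N),
  compdec (fun _ : 'I_2 => (ord0 : 'I_1)) (fun _ => op_ mu)
          (fplus1 (fun _ : 'I_N => (ord0 : 'I_1)))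
          (decplus1 (fun _ : 'I_1 => op_ nu)) ord0
  = gamma (op_ mu) [:: op_ nu; op_ (ounit O)].
Proof.
move=> HO N nu; rewrite /compdec fib_const enum2 /=.
rewrite {1 2}/decplus1 liftK unlift_none.
apply: sact_id; first exact: op_act1.
move=> q; rewrite tag_gmu /= => hq.
rewrite cats0 fib_fplus1 fib_fplus1_max mapval_lift fib_const fib_const /=.
rewrite !val_enum_ord.
have -> : iota 0 N ++ [:: N] = iota 0 N.+1 by rewrite -addn1 iotaD.
by rewrite index_uniq ?iota_uniq ?size_iota.
Qed.



Lemma map_const_in (T1 T2 : eqType) (F : T1 -> T2) c (s : seq T1) :
  (forall x, x \in s -> F x = c) -> map F s = nseq (size s) c.
Proof.
elim: s => [|x s IH] H //=; rewrite H ?mem_head // IH // => y ys.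
by apply: H; rewrite inE ys orbT.
Qed.

Lemma flatten_single (T1 T2 : Type) (g : T1 -> T2) (s : seq T1) :
  flatten [seq [:: g i] | i <- s] = map g s.
Proof. by elim: s => //= x s ->. Qed.

Lemma fibv_muf n (j i : 'I_n) :
  [seq val x | x <- fib (muf j) i] = val i :: (if j == i then [:: n] else [::]).
Proof. by rewrite fib_muf /= /bump leqNgt ltn_ord /=; case: ifP. Qed.

Lemma E_other (K : fieldType) (O : operad K) (mu : ob O 2) : is_operad O ->
  forall m n (f : 'I_m -> 'I_n) xi, wf f xi -> forall (j : 'I_m) (k' : 'I_n), f j != k' ->
  compdec f xi (muf j) (mudec mu j) k' = xi k'.
Proof.
move=> HO m n f xi wfxi j k' nk; rewrite /compdec compmuf.
have fk : forall i, i \in fib f k' -> f i = k' by move=> i; rewrite mem_filter => /andP [/eqP].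
rewrite (map_const_in (c := op_ (ounit O))); last first.
  move=> i /fk fi; rewrite /mudec; case: eqP => // e; move: nk; rewrite -e fi eqxx //.
rewrite gamma_units; last 2 first.
- exact: op_unit1.
- by rewrite wfxi.
apply: sact_id; first exact: op_act1.
move=> q; rewrite wfxi => hq.
have -> : [seq [seq val x | x <- fib (muf j) i] | i <- fib f k'] = [seq [:: val i] | i <- fib f k'].
  apply/eq_in_map => i /fk fi; rewrite fibv_muf.
  by case: eqP => // e; move: nk; rewrite e fi eqxx.
rewrite flatten_single -/(fibv f k') -/(fibv (ext f (f j)) k') fibv_ext (negbTE nk) cats0.
by rewrite index_uniq // ?uniq_fibv // /fibv size_map.
Qed.

Lemma sumn_1P (T : Type) (P : pred T) (s : seq T) :
  sumn [seq (1 + P i)%N | i <- s] = (size s + count P s)%N.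
Proof. by elim: s => //= x s ->; lia. Qed.

Lemma sumn_mudec (K : fieldType) (O : operad K) (mu : ob O 2) N (a : 'I_N) :
  sumn [seq tag y | y <- [seq mudec mu a i | i <- enum 'I_N]] = N.+1.
Proof.
rewrite -map_comp (eq_map (g := fun i => (1 + (i == a))%N)); last first.
  by move=> i /=; rewrite /mudec; case: (i == a).
rewrite sumn_1P size_enum_ord.
have -> : count (fun i => i == a) (enum 'I_N) = 1%N.
  by rewrite (count_uniq_mem a (enum_uniq _)) mem_enum.
by rewrite addn1.
Qed.

Lemma E_self (K : fieldType) (O : operad K) (mu : ob O 2) : is_operad O ->
  forall m n (f : 'I_m -> 'I_n) xi, wf f xi -> forall (k : 'I_n) (a : 'I_(size (fib f k))),
  compdec f xi (muf (tnth (in_tuple (fib f k)) a)) (mudec mu (tnth (in_tuple (fib f k)) a)) k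
  = compdec (fun _ : 'I_(size (fib f k)) => (ord0 : 'I_1))
       (fun _ => op_ (ocast (size (fib f k)) (projT2 (xi k)))) (muf a) (mudec mu a) ord0.
Proof.
move=> HO m n f xi wfxi k a.
move: (tnth (in_tuple (fib f k)) a) (mem_tnth a (in_tuple (fib f k)))
      (tnth_nth (tnth (in_tuple (fib f k)) a) (in_tuple (fib f k)) a) => j jin ej.
move: (ocast (size (fib f k)) (projT2 (xi k))) (op_ocast (wfxi k)) => nu ex.
have fj : f j = k by move: jin; rewrite mem_filter => /andP [/eqP].
have us : uniq (fib f k) by rewrite filter_uniq ?enum_uniq.
rewrite /compdec compmuf fj -ex !fib_const.
have -> : [seq mudec mu j i | i <- fib f k] = [seq mudec mu a i | i <- enum 'I_(size (fib f k))].
  have hs : size [seq mudec mu j i | i <- fib f k] = size [seq mudec mu a i | i <- enum 'I_(size (fib f k))] by rewrite size_map size_map size_enum_ord.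
  apply: (eq_from_nth (x0 := op_ (ounit O)) hs).
  move=> b; rewrite size_map => hb.
  rewrite (nth_map j) // (nth_map a) ?size_enum_ord // /mudec.
  rewrite [X in _ == X]ej nth_uniq //.
  have -> : (nth a (enum 'I_(size (fib f k))) b == a) = (b == a :> nat).
    by rewrite -(inj_eq val_inj) /= nth_enum_ord.
  by [].
apply: sact_ext => q.
rewrite tag_gamma; last by rewrite size_map size_enum_ord.
rewrite sumn_mudec => hq.
set N := size (fib f k).
pose L := fibv f k ++ [:: m]. pose lab := nth 0%N L.
have sL : size L = N.+1 by rewrite size_cat size_map addn1.
have uL : uniq L.
  rewrite cat_uniq uniq_fibv /= andbT orbF; apply/negP => /fibv_lt.
  by rewrite ltnn.
have eNn : [seq val x | x <- fib (ext f k) k] = L by rewrite -/(fibv _ _) fibv_ext eqxx.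
have eL : L = map lab (iota 0 N.+1) by rewrite -sL; exact: (esym (mkseq_nth 0%N L)).
have eLn' : flatten [seq [seq val x | x <- fib (muf a) i] | i <- enum 'I_N]
   = flatten [seq (val i :: (if a == i then [:: N] else [::])) | i <- enum 'I_N].
  by congr flatten; apply: eq_map => i; rewrite fibv_muf.
have eLn : flatten [seq [seq val x | x <- fib (muf j) i] | i <- fib f k]
   = map lab (flatten [seq (val i :: (if a == i then [:: N] else [::])) | i <- enum 'I_N]).
  rewrite map_flatten -map_comp; congr flatten.
  have hs : size [seq [seq val x | x <- fib (muf j) i] | i <- fib f k] =
     size [seq (map lab \o (fun i : 'I_N => (val i :: (if a == i then [:: N] else [::])))) i | i <- enum 'I_N]
    by rewrite size_map size_map size_enum_ord.
  apply: (eq_from_nth (x0 := [::]) hs) => b; rewrite size_map => hb.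
  rewrite (nth_map j) // (nth_map a) ?size_enum_ord // fibv_muf /=.
  have lb : lab b = val (nth j (fib f k) b).
    by rewrite /lab nth_cat size_map hb (nth_map j).
  have lN : lab N = m by rewrite /lab nth_cat size_map ltnn subnn.
  have -> : (j == nth j (fib f k) b) = (a == nth a (enum 'I_N) b).
    rewrite [X in X == _]ej nth_uniq // -(inj_eq val_inj) /= nth_enum_ord //.
  by rewrite nth_enum_ord // lb; case: ifP => //= _; rewrite lN.
rewrite eLn eLn' eNn val_enum_ord {1}eL.
have hsz : size (flatten [seq (val i :: (if a == i then [:: N] else [::])) | i <- enum 'I_N]) = N.+1.
  rewrite size_flatten /shape -map_comp.
  rewrite (eq_map (g := fun i : 'I_N => (1 + (a == i))%N)); last by move=> i /=; case: (a == i).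
  rewrite sumn_1P size_enum_ord.
  have -> : count (fun i => a == i) (enum 'I_N) = 1%N.
    have -> : count (fun i => a == i) (enum 'I_N) = count (pred1 a) (enum 'I_N).
      by apply: eq_count => i /=; rewrite eq_sym.
    by rewrite (count_uniq_mem a (enum_uniq _)) mem_enum.
  by rewrite addn1.
rewrite (nth_map 0%N) ?hsz // index_map_in //; first by rewrite -eL.
rewrite mem_iota /= add0n.
have : nth 0%N (flatten [seq (val i :: (if a == i then [:: N] else [::])) | i <- enum 'I_N]) q
   \in flatten [seq (val i :: (if a == i then [:: N] else [::])) | i <- enum 'I_N].
  by apply: mem_nth; rewrite hsz.
case/flatten_mapP => i _; rewrite inE; case/orP => [/eqP -> |]; first exact: ltnW (ltn_ord i).
by case: (a == i) => //; rewrite inE => /eqP ->.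
Qed.



Notation FM F := (@Fmor _ _ F _ _).

Lemma index_enum_ord m : index_enum 'I_m = enum 'I_m.
Proof. by rewrite enumT /index_enum [locked_with _ _]unlock. Qed.

Lemma R_tag (K : fieldType) (O : operad K) (mu : ob O 2) N (nu : ob O N) (a : 'I_N) :
  tag (compdec (fun _ : 'I_N => (ord0 : 'I_1)) (fun _ => op_ nu) (muf a) (mudec mu a) ord0) = N.+1.
Proof.
rewrite /compdec /= fib_const tag_gamma ?sumn_mudec //.
by rewrite size_map size_enum_ord.
Qed.

Lemma wf_fplus1 (K : fieldType) (O : operad K) m n (f : 'I_m -> 'I_n) (xi : 'I_n -> ops O) :
  wf f xi -> wf (fplus1 f) (decplus1 xi).
Proof.
move=> H i; rewrite /decplus1; case: (unliftP ord_max i) => [j ->|->].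
  by rewrite fib_fplus1 size_map H.
by rewrite fib_fplus1_max.
Qed.

Lemma wf_muf (K : fieldType) (O : operad K) (mu : ob O 2) n (i : 'I_n) :
  wf (muf i) (mudec mu i).
Proof.
move=> j; rewrite fib_muf /mudec eq_sym; by case: (i == j).
Qed.

Lemma Fmor_upd_sum (K : fieldType) (O : operad K) (F : functorO O) : is_functorO F ->
  forall m n (h : 'I_m -> 'I_n) (B : 'I_n -> ops O), wf h B ->
  forall k T, T = tag (B k) -> forall (I : Type) (r : seq I) (Y : I -> ob O T) v,
  FM F h (upd B k (op_ (\sum_(i <- r) Y i))) v = \sum_(i <- r) FM F h (upd B k (op_ (Y i))) v.
Proof.
case=> _ Hml _ _ m n h B wfB k T eT; subst T => I r Y v.
elim: r => [|x r IH].
  rewrite !big_nil; have := Hml _ _ h B wfB k 0 0 1 v.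
  rewrite !scale1r addr0 => E.
  by apply: (@addrI _ (FM F h (upd B k (op_ 0)) v)); rewrite addr0; exact: esym E.
rewrite !big_cons; have := Hml _ _ h B wfB k (Y x) (\sum_(i <- r) Y i) 1 v.
by rewrite !scale1r => ->; rewrite IH.
Qed.

Lemma mut_k (K : fieldType) (O : operad K) (mu : ob O 2) : is_operad O -> right_leibniz mu ->
  forall (F : functorO O), is_functorO F ->
  forall m n (f : 'I_m -> 'I_n) xi, wf f xi -> forall (v : Fob F m.+1) (k : 'I_n),
  FM F (muf k) (mudec mu k) (FM F (fplus1 f) (decplus1 xi) v)
  = \sum_(j < m | f j == k) FM F f xi (FM F (muf j) (mudec mu j) v).
Proof.
move=> HO HL F HF m n f xi wfxi v k.
have [Hlin Hml Hid Hcomp] := HF.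
rewrite -Hcomp; [|exact: wf_fplus1|exact: wf_muf].
rewrite mufcomp.
rewrite (eq_bigr (fun j => FM F (ext f k) (compdec f xi (muf j) (mudec mu j)) v)); last first.
  move=> j /eqP fj; rewrite -Hcomp //; last exact: wf_muf. by rewrite (compmuf f j) fj.
rewrite index_enum_ord -big_filter -/(fib f k) big_tnth.
set D := compdec (muf k) (mudec mu k) (fplus1 f) (decplus1 xi).
set N := size (fib f k).
pose nu : ob O N := ocast N (projT2 (xi k)).
have ex : op_ nu = xi k by apply: op_ocast; rewrite wfxi.
have tD : tag (D k) = N.+1 by rewrite /D D_self // tag_gmu wfxi.
have wfD : wf (ext f k) D.
  move=> i; rewrite fib_ext size_cat size_map.
  case: (eqVneq i k) => [->|nik]; first by rewrite tD addn1.
  by rewrite /D D_other // wfxi addn0.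
have eD : D = upd D k (op_ (el1 (compdec (fun _ : 'I_2 => (ord0 : 'I_1)) (fun _ => op_ mu)
                 (fplus1 (fun _ : 'I_N => (ord0 : 'I_1)))
                 (decplus1 (fun _ : 'I_1 => op_ nu))) N.+1)).
  apply: functional_extensionality => i; rewrite /upd; case: eqP => // ->.
  rewrite /el1 op_ocast; first by rewrite /D D_self // L_loc // ex.
  by rewrite L_loc // tag_gmu.
rewrite eD (HL N nu) (Fmor_upd_sum HF wfD (esym tD)).
apply: eq_bigr => a _.
congr (FM F _ _ v); apply: functional_extensionality => i; rewrite /upd.
case: eqP => [->|/eqP nik].
  by rewrite /el1 op_ocast ?R_tag // E_self.
rewrite /D D_other // E_other //.
have : tnth (in_tuple (fib f k)) a \in fib f k by apply: mem_tnth.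
by rewrite mem_filter => /andP [/eqP ->]; rewrite eq_sym.
Qed.





Lemma mut_nat (K : fieldType) (O : operad K) (mu : ob O 2) : is_operad O -> right_leibniz mu ->
  forall (F : functorO O), is_functorO F ->
  forall m n (f : 'I_m -> 'I_n) xi, wf f xi -> forall (v : Fob F m.+1),
  mut mu F (FM F (fplus1 f) (decplus1 xi) v) = FM F f xi (mut mu F v).
Proof.
move=> HO HL F HF m n f xi wfxi v.
have [Hlin _ _ _] := HF.
rewrite /mut (lin_sum (Hlin _ _ f xi)) (partition_big f xpredT) //=.
by apply: eq_bigr => k _; rewrite mut_k.
Qed.

Lemma mut_lin (K : fieldType) (O : operad K) (mu : ob O 2) (F : functorO O) :
  is_functorO F -> forall n, islin (@mut K O mu F n).
Proof.
case=> Hlin _ _ _ n a u v; rewrite /mut scaler_sumr -big_split /=.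
by apply: eq_bigr => i _; rewrite Hlin.
Qed.

Lemma mut_phi (K : fieldType) (O : operad K) (mu : ob O 2) (F G : functorO O)
  (phi : forall n, Fob F n -> Fob G n) : is_nat F G phi ->
  forall n (v : Fob F n.+1), phi n (mut mu F v) = mut mu G (phi n.+1 v).
Proof.
case=> Hl Hn n v; rewrite /mut (lin_sum (Hl n)).
by apply: eq_bigr => i _; rewrite Hn //; apply: wf_muf.
Qed.

Theorem proposition3p13 (K : fieldType) (O : operad K) (mu : ob O 2) :
  is_operad O -> right_leibniz mu ->
  (* (1) closure under subobjects *)
  ((forall (F G : functorO O) (phi : forall n, Fob G n -> Fob F n),
      is_functorO F -> is_functorO G -> is_nat G F phi ->
      (forall n, injective (phi n)) ->
      inFmu mu F -> inFmu mu G)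
   (* closure under quotients *)
   /\ (forall (F G : functorO O) (phi : forall n, Fob F n -> Fob G n),
      is_functorO F -> is_functorO G -> is_nat F G phi ->
      (forall n (w : Fob G n), exists v, phi n v = w) ->
      inFmu mu F -> inFmu mu G)
   (* closure under direct sums *)
   /\ (forall (J : Type) (Fj : J -> functorO O) (F : functorO O)
         (iota : forall j n, Fob (Fj j) n -> Fob F n),
      (forall j, is_functorO (Fj j)) -> is_functorO F ->
      (forall j, is_nat (Fj j) F (iota j)) -> is_dsum Fj F iota ->
      (forall j, inFmu mu (Fj j)) -> inFmu mu F))
  /\
  (* (2) *)
  (forall (F1 F2 F3 : functorO O)
          (i : forall n, Fob F1 n -> Fob F2 n) (p : forall n, Fob F2 n -> Fob F3 n),
     is_functorO F1 -> is_functorO F2 -> is_functorO F3 ->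
     short_exact F1 F2 F3 i p -> inFmu mu F1 -> inFmu mu F3 ->
     exists psi : forall n, Fob (delta F3) n -> Fob F1 n,
       is_nat (delta F3) F1 psi
       /\ (forall n (v : Fob F2 n.+1), mut mu F2 v = i n (psi n (p n.+1 v)))
       /\ (forall psi' : forall n, Fob (delta F3) n -> Fob F1 n,
             (forall n (v : Fob F2 n.+1), mut mu F2 v = i n (psi' n (p n.+1 v))) ->
             forall n w, psi' n w = psi n w)
       /\ (inFmu mu F2 <-> forall n (w : Fob (delta F3) n), psi n w = 0)).
Proof.
move=> HO HL; split; [split; [|split]|].
- move=> F G phi HF HG Hphi inj HFm n v.
  apply: (inj n); rewrite (mut_phi mu Hphi) HFm.
  by rewrite (lin0 (Hphi.1 n)).
- move=> F G phi HF HG Hphi sur HFm n w.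
  have [v <-] := sur _ w.
  by rewrite -(mut_phi mu Hphi) HFm (lin0 (Hphi.1 n)).
- move=> J Fj F iota HFj HF Hiota Hds HFjm n v.
  have [Hs _] := Hds n.+1; have [s ->] := Hs v.
  rewrite (lin_sum (mut_lin mu HF (n:=n))) big1 // => q _.
  by rewrite -(mut_phi mu (Hiota _)) HFjm (lin0 ((Hiota _).1 n)).
move=> F1 F2 F3 i p HF1 HF2 HF3 [Hi [Hp Hex]] H1 H3.
have ilin n := (Hi.1 n).
have plin n := (Hp.1 n).
have pker : forall n (v : Fob F2 n.+1), p n (mut mu F2 v) = 0.
  by move=> n v; rewrite (mut_phi mu Hp) H3.
have Hpsi : forall n (w : Fob F3 n.+1), exists u, forall v, p n.+1 v = w -> mut mu F2 v = i n u.
  move=> n w; have [v0 ev0] := (Hex n.+1).2.1 w.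
  have [u eu] := ((Hex n).2.2 _).1 (pker n v0).
  exists u => v ev.
  have : p n.+1 (v - v0) = 0 by rewrite (linB (plin _)) ev ev0 subrr.
  case/((Hex n.+1).2.2 _).1 => u' eu'.
  have -> : v = i n.+1 u' + v0 by rewrite -eu' subrK.
  rewrite (linD (mut_lin mu HF2 (n:=n))) -(mut_phi mu Hi) H1 (lin0 (ilin n)) add0r.
  exact: eu.
pose psi n w := proj1_sig (constructive_indefinite_description _ (Hpsi n w)).
have hpsi : forall n w v, p n.+1 v = w -> mut mu F2 v = i n (psi n w).
  by move=> n w; apply: (proj2_sig (constructive_indefinite_description _ (Hpsi n w))).
have fact : forall n (v : Fob F2 n.+1), mut mu F2 v = i n (psi n (p n.+1 v)).
  by move=> n v; apply: hpsi.
exists psi; split; [|split; [exact: fact|split]].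
- split.
  + move=> n a w1 w2.
    have [v1 e1] := (Hex n.+1).2.1 w1.
    have [v2 e2] := (Hex n.+1).2.1 w2.
    apply: (Hex n).1; rewrite -(hpsi n _ (a *: v1 + v2)); last by rewrite plin e1 e2.
    by rewrite (mut_lin mu HF2) (ilin n) (hpsi n w1 v1 e1) (hpsi n w2 v2 e2).
  + move=> m n f xi wfxi w.
    have [v ev] := (Hex m.+1).2.1 w.
    apply: (Hex n).1.
    rewrite -(hpsi n _ (FM F2 (fplus1 f) (decplus1 xi) v)); last first.
      by rewrite /= Hp.2 ?ev //; apply: wf_fplus1.
    by rewrite mut_nat // (hpsi m w v ev) Hi.2.
- move=> psi' H' n w.
  have [v ev] := (Hex n.+1).2.1 w.
  apply: (Hex n).1; by rewrite -(hpsi n w v ev) -ev -H'.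
- split.
  + move=> H2 n w; have [v ev] := (Hex n.+1).2.1 w.
    apply: (Hex n).1; by rewrite -(hpsi n w v ev) H2 (lin0 (ilin n)).
  + move=> H0 n v; by rewrite fact H0 (lin0 (ilin n)).
Qed.
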